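(* For every integer $n\ge 1$ we have $I(T_n)=12n-4$ and $|V_{T_n}|=12n$.
   Context: The vertex set $V$ consists of all reduced fractions $p/q$ ($\gcd(p,q)=1$) together with $1/0$, with $p/q=(-p)/(-q)$, identified with $\mathbb Q\cup\{\infty\}\subset\partial_\infty\mathbb H$; $d(p/q,a/b)=|pb-qa|$. The Farey tessellation of $\mathbb H$ consists of the ideal triangles whose three vertices in $V$ pairwise have $d=1$. The dual graph $\mathcal G$ is the trivalent tree with one vertex per ideal triangle and one edge for each pair of triangles sharing a side (dual to that side). For $c\in V$, $H_c\subset\mathcal G$ is the bi-infinite path formed by the edges of $\mathcal G$ dual to Farey edges having $c$ as an endpoint. For a finite subgraph $K\subset\mathcal G$, $V_K=\{c\in V: H_c\cap K \text{ is neither empty nor a single point}\}$ and $I(K)=\max\{d(c,c'): c,c'\in V_K\}$. Construction of $T_n$: take an embedded path $P$ of $7n-1$ edges contained in some $H_c$, with non-endpoint vertices numbered in order $1,\dots,7n-2$. Let $J_1=\{1,\dots,2n-1\}\cup\{5n,\dots,7n-2\}$, $J_2=\{2n,\dots,3n-1\}\cup\{4n,\dots,5n-1\}$, $J_3=\{3n,\dots,4n-1\}$. For a non-endpoint vertex $v$ of $P$ and $r\ge1$, let $B_r(v)$ be the set of edges of $\mathcal G$ lying on some path of length at most $r$ in $\mathcal G$ that starts at $v$ with the unique edge at $v$ not in $P$ and never returns to $v$ (so $|B_1(v)|=1$, $|B_2(v)|=3$, $|B_3(v)|=7$). $T_n$ is the union of $P$ with $B_1(v)$ for $v\in J_1$,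 $B_2(v)$ for $v\in J_2$, and $B_3(v)$ for $v\in J_3$. *)

(* Defs.v *)
From Stdlib Require Import ZArith List Lia.
Open Scope Z_scope.

(** Elements of V: reduced fractions p/q, represented by their canonical
    representative (p,q) with gcd(p,q)=1 and q>0, or (1,0) for 1/0.
    This realizes the identification p/q = (-p)/(-q). *)
Definition pt : Type := (Z * Z)%type.

Definition is_vertex (x : pt) : Prop :=
  Z.gcd (fst x) (snd x) = 1 /\ (0 < snd x \/ (snd x = 0 /\ fst x = 1)).

Definition dist (x y : pt) : Z := Z.abs (fst x * snd y - snd x * fst y).

(** Ideal triangles of the Farey tessellation (= vertices of the dual tree G),
    represented by a triple of their vertices (order irrelevant). *)
Definition tri : Type := (pt * pt * pt)%type.

Definition in_tri (x : pt) (t : tri) : Prop :=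
  let '(a, b, e) := t in x = a \/ x = b \/ x = e.

Definition is_tri (t : tri) : Prop :=
  let '(a, b, e) := t in
  is_vertex a /\ is_vertex b /\ is_vertex e /\
  dist a b = 1 /\ dist b e = 1 /\ dist a e = 1.

Definition tri_eq (t u : tri) : Prop := forall x, in_tri x t <-> in_tri x u.

(** Farey edges (= edges of the dual tree G), represented by an (ordered)
    pair of endpoints; (a,b) and (b,a) denote the same edge. *)
Definition side : Type := (pt * pt)%type.

Definition farey_edge (s : side) : Prop :=
  is_vertex (fst s) /\ is_vertex (snd s) /\ dist (fst s) (snd s) = 1.

Definition side_of (s : side) (t : tri) : Prop :=
  in_tri (fst s) t /\ in_tri (snd s) t /\ fst s <> snd s.

Definition has_endpoint (c : pt) (s : side) : Prop := fst s = c \/ snd s = c.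

Definition adjacent (t u : tri) : Prop :=
  is_tri t /\ is_tri u /\ ~ tri_eq t u /\ exists s, side_of s t /\ side_of s u.

(** A subgraph of G given by a set of edges (Farey sides); its vertex set
    consists of the endpoints (triangles) of these edges. *)
Definition subgraph : Type := side -> Prop.

Definition sub_verts (K : subgraph) (t : tri) : Prop :=
  is_tri t /\ exists s, side_of s t /\ K s.

(** The bi-infinite path H_c: edges dual to Farey edges with endpoint c,
    vertices the endpoints of these edges. *)
Definition H_edges (c : pt) (s : side) : Prop := farey_edge s /\ has_endpoint c s.

Definition H_verts (c : pt) (t : tri) : Prop :=
  is_tri t /\ exists s, side_of s t /\ has_endpoint c s.

Definition inter_verts (c : pt) (K : subgraph) (t : tri) : Prop :=
  H_verts c t /\ sub_verts K t.
Definition inter_edges (c : pt) (K : subgraph) (s : side) : Prop :=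
  H_edges c s /\ K s.

Definition inter_empty (c : pt) (K : subgraph) : Prop :=
  (forall t, ~ inter_verts c K t) /\ (forall s, ~ inter_edges c K s).

Definition inter_single_point (c : pt) (K : subgraph) : Prop :=
  (exists t, inter_verts c K t /\ forall t', inter_verts c K t' -> tri_eq t t') /\
  (forall s, ~ inter_edges c K s).

Definition V_of (K : subgraph) (c : pt) : Prop :=
  is_vertex c /\ ~ inter_empty c K /\ ~ inter_single_point c K.

Definition I_is (K : subgraph) (m : Z) : Prop :=
  (exists c c', V_of K c /\ V_of K c' /\ dist c c' = m) /\
  (forall c c', V_of K c -> V_of K c' -> dist c c' <= m).

Definition card_is (A : pt -> Prop) (k : nat) : Prop :=
  exists l : list pt, NoDup l /\ (forall x, In x l <-> A x) /\ length l = k.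

Definition embedded_path_in_H (c : pt) (p : nat -> tri) (m : nat) : Prop :=
  (forall i, (i <= m)%nat -> is_tri (p i)) /\
  (forall i, (i < m)%nat -> adjacent (p i) (p (S i)) /\
     exists s, side_of s (p i) /\ side_of s (p (S i)) /\ has_endpoint c s) /\
  (forall i j, (i < j <= m)%nat -> ~ tri_eq (p i) (p j)).

Definition path_edges (p : nat -> tri) (m : nat) (s : side) : Prop :=
  exists i, (i < m)%nat /\ side_of s (p i) /\ side_of s (p (S i)).

Definition B (p : nat -> tri) (m : nat) (i : nat) (r : nat) (s : side) : Prop :=
  exists (u : nat -> tri) (k : nat),
    (1 <= k <= r)%nat /\ u 0%nat = p i /\
    (forall j, (j < k)%nat -> adjacent (u j) (u (S j))) /\
    (forall j j', (j < j' <= k)%nat -> ~ tri_eq (u j) (u j')) /\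
    (forall s0, side_of s0 (u 0%nat) -> side_of s0 (u 1%nat) -> ~ path_edges p m s0) /\
    (exists j, (j < k)%nat /\ side_of s (u j) /\ side_of s (u (S j))).

Definition J1 (n i : nat) : Prop :=
  ((1 <= i <= 2 * n - 1) \/ (5 * n <= i <= 7 * n - 2))%nat.
Definition J2 (n i : nat) : Prop :=
  ((2 * n <= i <= 3 * n - 1) \/ (4 * n <= i <= 5 * n - 1))%nat.
Definition J3 (n i : nat) : Prop :=
  (3 * n <= i <= 4 * n - 1)%nat.

Definition T (n : nat) (p : nat -> tri) : subgraph := fun s =>
  path_edges p (7 * n - 1) s \/
  (exists i, J1 n i /\ B p (7 * n - 1) i 1 s) \/
  (exists i, J2 n i /\ B p (7 * n - 1) i 2 s) \/
  (exists i, J3 n i /\ B p (7 * n - 1) i 3 s).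

(* Main.v *)
Require Import Defs.
From Stdlib Require Import ZArith List Lia Classical.
Open Scope Z_scope.

Definition det (u v : Z*Z) : Z := fst u * snd v - snd u * fst v.
Definition Nz (v : pt) : pt :=
  if orb (0 <? snd v) (andb (snd v =? 0) (0 <? fst v)) then v else (- fst v, - snd v).
Definition lin (f g : pt) (u : Z*Z) : pt :=
  (fst u * fst f + snd u * fst g, fst u * snd f + snd u * snd g).
Definition phi f g u := Nz (lin f g u).
Definition peq (u v : Z*Z) : Prop :=
  (fst u = fst v /\ snd u = snd v) \/ (fst u = - fst v /\ snd u = - snd v).

Lemma Nz_cases v : (Nz v = v) \/ (Nz v = (- fst v, - snd v)).
Proof. unfold Nz. destruct (orb _ _); auto. Qed.

Lemma Nz_vertex x : is_vertex x -> Nz x = x.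
Proof.
  destruct x as [a b]; unfold is_vertex, Nz; simpl; intros [_ H].
  destruct (Z.ltb_spec 0 b); simpl; auto.
  destruct (Z.eqb_spec b 0); simpl; [|lia].
  destruct (Z.ltb_spec 0 a); simpl; auto. lia.
Qed.

Lemma Nz_peq u v : Nz u = Nz v -> peq u v.
Proof.
  destruct u as [a b], v as [c d]; unfold peq; simpl.
  destruct (Nz_cases (a,b)) as [E|E]; rewrite E; clear E;
  destruct (Nz_cases (c,d)) as [E|E]; rewrite E; clear E; simpl;
  intro H; injection H; lia.
Qed.

Lemma peq_Nz u v : peq u v -> (fst v <> 0 \/ snd v <> 0) -> Nz u = Nz v.
Proof.
  destruct u as [a b], v as [c d]; unfold peq, Nz; simpl; intros H H'.
  destruct (Z.ltb_spec 0 b); destruct (Z.ltb_spec 0 d);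
  destruct (Z.eqb_spec b 0); destruct (Z.eqb_spec d 0);
  destruct (Z.ltb_spec 0 a); destruct (Z.ltb_spec 0 c); simpl;
  f_equal; lia.
Qed.

Lemma det_Nz u v : Z.abs (det (Nz u) (Nz v)) = Z.abs (det u v).
Proof.
  destruct (Nz_cases u) as [E|E]; rewrite E;
  destruct (Nz_cases v) as [E'|E']; rewrite E'; unfold det; simpl;
  first [reflexivity | f_equal; ring | rewrite <- Z.abs_opp; f_equal; ring].
Qed.

Lemma det_lin f g u v : det (lin f g u) (lin f g v) = det u v * det f g.
Proof. unfold det, lin; simpl; ring. Qed.

Lemma dist_det x y : dist x y = Z.abs (det x y).
Proof. reflexivity. Qed.

Lemma dist_phi f g u v : Z.abs (det f g) = 1 ->
  dist (phi f g u) (phi f g v) = Z.abs (det u v).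
Proof.
  intro H. rewrite dist_det; unfold phi; rewrite det_Nz, det_lin, Z.abs_mul, H; lia.
Qed.

Lemma lin_peq f g u v : Z.abs (det f g) = 1 -> peq (lin f g u) (lin f g v) -> peq u v.
Proof.
  intros H. unfold peq, lin, det in *; destruct f as [f1 f2], g as [g1 g2],
    u as [u1 u2], v as [v1 v2]; simpl in *.
  intros [[E1 E2]|[E1 E2]].
  - left. assert (A1: (u1 - v1) * (f1*g2 - f2*g1) = 0).
    { transitivity ((u1*f1+u2*g1 - (v1*f1+v2*g1))*g2 - (u1*f2+u2*g2 - (v1*f2+v2*g2))*g1);
      [ring | rewrite E1, E2; ring]. }
    assert (A2: (u2 - v2) * (f1*g2 - f2*g1) = 0).
    { transitivity ((u1*f2+u2*g2 - (v1*f2+v2*g2))*f1 - (u1*f1+u2*g1 - (v1*f1+v2*g1))*f2);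
      [ring | rewrite E1, E2; ring]. }
    apply Z.mul_eq_0 in A1; apply Z.mul_eq_0 in A2; lia.
  - right. assert (A1: (u1 + v1) * (f1*g2 - f2*g1) = 0).
    { transitivity ((u1*f1+u2*g1 + (v1*f1+v2*g1))*g2 - (u1*f2+u2*g2 + (v1*f2+v2*g2))*g1);
      [ring | rewrite E1, E2; ring]. }
    assert (A2: (u2 + v2) * (f1*g2 - f2*g1) = 0).
    { transitivity ((u1*f2+u2*g2 + (v1*f2+v2*g2))*f1 - (u1*f1+u2*g1 + (v1*f1+v2*g1))*f2);
      [ring | rewrite E1, E2; ring]. }
    apply Z.mul_eq_0 in A1; apply Z.mul_eq_0 in A2; lia.
Qed.

Lemma phi_inj f g u v : Z.abs (det f g) = 1 -> phi f g u = phi f g v -> peq u v.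
Proof. intros H E. apply (lin_peq f g); auto. apply Nz_peq; exact E. Qed.

Lemma phi_eq f g u v : Z.abs (det f g) = 1 -> peq u v -> (fst v <> 0 \/ snd v <> 0) ->
  phi f g u = phi f g v.
Proof.
  intros H P NZ. unfold phi. apply peq_Nz.
  - destruct u as [u1 u2], v as [v1 v2]; unfold peq, lin in *; simpl in *; lia.
  - destruct (classic (lin f g v = (0,0))) as [E|E].
    + exfalso. assert (peq v (0,0)).
      { apply (lin_peq f g); auto. rewrite E. unfold lin, peq; simpl; lia. }
      unfold peq in *; simpl in *; lia.
    + destruct (lin f g v) as [a b]; simpl.
      destruct (Z.eq_dec a 0); destruct (Z.eq_dec b 0); subst; auto.
Qed.

Lemma gcd_det x y : Z.abs (det x y) = 1 -> Z.gcd (fst x) (snd x) = 1.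
Proof.
  intro H. unfold det in H.
  assert (D: (Z.gcd (fst x) (snd x) | fst x * snd y - snd x * fst y)).
  { apply Z.divide_sub_r; apply Z.divide_mul_l;
    [apply Z.gcd_divide_l | apply Z.gcd_divide_r]. }
  assert (D1: (Z.gcd (fst x) (snd x) | 1)).
  { destruct (Z.abs_spec (fst x * snd y - snd x * fst y)) as [[_ E]|[_ E]];
    rewrite E in H. rewrite <- H; auto.
    rewrite <- H. apply Z.divide_opp_r; auto. }
  apply Z.divide_1_r in D1. pose proof (Z.gcd_nonneg (fst x) (snd x)). lia.
Qed.

Lemma vertex_Nz x y : Z.abs (det x y) = 1 -> is_vertex (Nz x).
Proof.
  intro H. pose proof (gcd_det x y H) as G.
  destruct x as [a b]; simpl in G. unfold is_vertex, Nz; simpl.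
  destruct (Z.ltb_spec 0 b); simpl.
  - split; auto.
  - destruct (Z.eqb_spec b 0); simpl.
    + subst b. rewrite Z.gcd_0_r in G.
      destruct (Z.ltb_spec 0 a); simpl; split.
      * rewrite Z.gcd_0_r; lia.
      * lia.
      * rewrite Z.gcd_opp_l, Z.gcd_0_r; lia.
      * lia.
    + split. rewrite Z.gcd_opp_l, Z.gcd_opp_r; auto. lia.
Qed.

Lemma vertex_phi f g u w : Z.abs (det f g) = 1 -> Z.abs (det u w) = 1 ->
  is_vertex (phi f g u).
Proof.
  intros H1 H2. apply (vertex_Nz _ (lin f g w)). rewrite det_lin, Z.abs_mul, H1, H2. lia.
Qed.

Lemma lin_surj f g e : Z.abs (det f g) = 1 -> exists w, lin f g w = e.
Proof.
  intro H. set (d := det f g).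
  exists (det e g * d, det f e * d).
  assert (dd : d * d = 1) by (subst d; destruct (Z.abs_spec (det f g)); nia).
  destruct e as [e1 e2]; unfold lin, det in *; destruct f as [f1 f2], g as [g1 g2];
  simpl in *. f_equal.
  - transitivity (e1 * (d*d)); [|rewrite dd; ring]. subst d; ring.
  - transitivity (e2 * (d*d)); [|rewrite dd; ring]. subst d; ring.
Qed.

Lemma vertex_is_phi f g e : Z.abs (det f g) = 1 -> is_vertex e -> exists w, e = phi f g w.
Proof.
  intros H V. destruct (lin_surj f g e H) as [w E]. exists w. unfold phi. rewrite E.
  symmetry; apply Nz_vertex; auto.
Qed.

Lemma apex_model a b w : Z.abs (det a b) = 1 -> Z.abs (det a w) = 1 -> Z.abs (det b w) = 1 ->
  peq w (fst a + fst b, snd a + snd b) \/ peq w (fst a - fst b, snd a - snd b).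
Proof.
  intros H1 H2 H3.
  assert (E1: det a b * fst w = - det b w * fst a + det a w * fst b) by (unfold det; ring).
  assert (E2: det a b * snd w = - det b w * snd a + det a w * snd b) by (unfold det; ring).
  remember (det a b) as D. remember (det b w) as X. remember (det a w) as Y.
  unfold peq; simpl.
  destruct (Z.abs_spec D) as [[_ ED]|[_ ED]]; rewrite ED in H1;
  destruct (Z.abs_spec X) as [[_ EX]|[_ EX]]; rewrite EX in H3;
  destruct (Z.abs_spec Y) as [[_ EY]|[_ EY]]; rewrite EY in H2;
  assert (D = 1 \/ D = -1) as [-> | ->] by lia;
  assert (X = 1 \/ X = -1) as [-> | ->] by lia;
  assert (Y = 1 \/ Y = -1) as [-> | ->] by lia; try lia.
Qed.

Definition nz (v : Z*Z) := fst v <> 0 \/ snd v <> 0.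
Definition vadd (u v : Z*Z) := (fst u + fst v, snd u + snd v).
Definition vsub (u v : Z*Z) := (fst u - fst v, snd u - snd v).
Definition other a b c w := Z.abs (det a b) = 1 /\ nz c /\ nz w /\
  ((peq c (vadd a b) /\ peq w (vsub a b)) \/ (peq c (vsub a b) /\ peq w (vadd a b))).
Definition sd (x y : pt) (s : side) := (fst s = x /\ snd s = y) \/ (fst s = y /\ snd s = x).

Lemma dist_sym x y : dist x y = dist y x.
Proof. unfold dist. rewrite <- Z.abs_opp. f_equal. ring. Qed.

Lemma tri_eq_refl t : tri_eq t t.
Proof. unfold tri_eq; tauto. Qed.
Lemma tri_eq_sym t u : tri_eq t u -> tri_eq u t.
Proof. unfold tri_eq; intros H x; rewrite H; tauto. Qed.
Lemma tri_eq_trans t u v : tri_eq t u -> tri_eq u v -> tri_eq t v.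
Proof. unfold tri_eq; intros H H' x; rewrite H; auto. Qed.

Lemma tri_eq_of (x y z x' y' z' : pt) :
  (x = x' \/ x = y' \/ x = z') -> (y = x' \/ y = y' \/ y = z') -> (z = x' \/ z = y' \/ z = z') ->
  (x' = x \/ x' = y \/ x' = z) -> (y' = x \/ y' = y \/ y' = z) -> (z' = x \/ z' = y \/ z' = z) ->
  tri_eq (x,y,z) (x',y',z').
Proof.
  unfold tri_eq, in_tri; intros; split; intros; intuition congruence.
Qed.

Lemma side_of_teq s t u : side_of s t -> tri_eq t u -> side_of s u.
Proof. unfold side_of, tri_eq; intros [A [B C]] H; rewrite <- !H; auto. Qed.

Lemma side_of_sd s x y t : sd x y s -> in_tri x t -> in_tri y t -> x <> y -> side_of s t.
Proof. unfold sd, side_of; intros [[-> ->]|[-> ->]]; auto. Qed.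

Lemma tri_with_side s u : is_tri u -> side_of s u ->
  exists e, tri_eq u (fst s, snd s, e) /\ is_vertex e /\ is_vertex (fst s) /\ is_vertex (snd s) /\
    dist (fst s) e = 1 /\ dist (snd s) e = 1 /\ dist (fst s) (snd s) = 1.
Proof.
  destruct u as [[x y] z]; unfold is_tri, side_of, in_tri; simpl.
  intros [Vx [Vy [Vz [Dxy [Dyz Dxz]]]]] [S1 [S2 S3]].
  pose proof (dist_sym x y); pose proof (dist_sym y z); pose proof (dist_sym x z).
  destruct S1 as [E1|[E1|E1]]; destruct S2 as [E2|[E2|E2]]; rewrite E1, E2 in *;
  try congruence.
  - exists z; split; [apply tri_eq_of; auto|]; split; [auto|]; split; [auto|]; split; [auto|]; repeat split; congruence.
  - exists y; split; [apply tri_eq_of; auto|]; split; [auto|]; split; [auto|]; split; [auto|]; repeat split; congruence.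
  - exists z; split; [apply tri_eq_of; auto|]; split; [auto|]; split; [auto|]; split; [auto|]; repeat split; congruence.
  - exists x; split; [apply tri_eq_of; auto|]; split; [auto|]; split; [auto|]; split; [auto|]; repeat split; congruence.
  - exists y; split; [apply tri_eq_of; auto|]; split; [auto|]; split; [auto|]; split; [auto|]; repeat split; congruence.
  - exists x; split; [apply tri_eq_of; auto|]; split; [auto|]; split; [auto|]; split; [auto|]; repeat split; congruence.
Qed.

Lemma peq_trans u v w : peq u v -> peq v w -> peq u w.
Proof. unfold peq; lia. Qed.
Lemma peq_sym u v : peq u v -> peq v u.
Proof. unfold peq; lia. Qed.

Lemma apex_phi f g a b e : Z.abs (det f g) = 1 -> Z.abs (det a b) = 1 -> is_vertex e ->
  dist (phi f g a) e = 1 -> dist (phi f g b) e = 1 ->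
  exists w, e = phi f g w /\ (peq w (vadd a b) \/ peq w (vsub a b)).
Proof.
  intros H Hab Ve D1 D2. destruct (vertex_is_phi f g e H Ve) as [w ->].
  exists w; split; auto. rewrite dist_phi in D1, D2 by auto.
  apply apex_model; auto.
Qed.

Lemma flip f g a b w0 w1 t u s : Z.abs (det f g) = 1 -> other a b w0 w1 ->
  tri_eq t (phi f g a, phi f g b, phi f g w0) -> is_tri u -> ~ tri_eq t u -> side_of s u ->
  sd (phi f g a) (phi f g b) s -> tri_eq u (phi f g a, phi f g b, phi f g w1).
Proof.
  intros H [Hab [N0 [N1 O]]] Ht Vu NE Su SD.
  destruct (tri_with_side s u Vu Su) as [e [Ue [Ve [_ [_ [D1 [D2 _]]]]]]].
  assert (Ue' : tri_eq u (phi f g a, phi f g b, e) /\ dist (phi f g a) e = 1 /\ dist (phi f g b) e = 1).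
  { destruct SD as [[E1 E2]|[E1 E2]]; rewrite E1, E2 in *;
    (split; [eapply tri_eq_trans; [exact Ue| apply tri_eq_of; auto] | split; auto]). }
  destruct Ue' as [Ue2 [D1' D2']].
  destruct (apex_phi f g a b e H Hab Ve D1' D2') as [w [-> Hw]].
  assert (C: peq w w0 \/ peq w w1).
  { destruct O as [[P0 P1]|[P0 P1]]; destruct Hw as [Hw|Hw].
    - left. eapply peq_trans; [exact Hw| apply peq_sym; auto].
    - right. eapply peq_trans; [exact Hw| apply peq_sym; auto].
    - right. eapply peq_trans; [exact Hw| apply peq_sym; auto].
    - left. eapply peq_trans; [exact Hw| apply peq_sym; auto]. }
  destruct C as [C|C].
  - exfalso; apply NE. rewrite (phi_eq f g w w0 H C N0) in Ue2.
    eapply tri_eq_trans; [exact Ht| apply tri_eq_sym; auto].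
  - rewrite (phi_eq f g w w1 H C N1) in Ue2. auto.
Qed.

Lemma nbr3 f g a b c wab wac wbc t u s : Z.abs (det f g) = 1 ->
  other a b c wab -> other a c b wac -> other b c a wbc ->
  tri_eq t (phi f g a, phi f g b, phi f g c) -> adjacent t u -> side_of s t -> side_of s u ->
  (sd (phi f g a) (phi f g b) s /\ tri_eq u (phi f g a, phi f g b, phi f g wab)) \/
  (sd (phi f g a) (phi f g c) s /\ tri_eq u (phi f g a, phi f g c, phi f g wac)) \/
  (sd (phi f g b) (phi f g c) s /\ tri_eq u (phi f g b, phi f g c, phi f g wbc)).
Proof.
  intros H O1 O2 O3 Ht [Vt [Vu [NE _]]] St Su.
  pose proof St as [S1 [S2 S3]].
  apply Ht in S1; apply Ht in S2. unfold in_tri in S1, S2.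
  assert (T1: tri_eq t (phi f g a, phi f g c, phi f g b)).
  { eapply tri_eq_trans; [exact Ht|]. apply tri_eq_of; auto. }
  assert (T2: tri_eq t (phi f g b, phi f g c, phi f g a)).
  { eapply tri_eq_trans; [exact Ht|]. apply tri_eq_of; auto. }
  destruct S1 as [E1|[E1|E1]]; destruct S2 as [E2|[E2|E2]]; try congruence.
  - left. assert (SD: sd (phi f g a) (phi f g b) s) by (left; auto).
    split; auto. eapply flip; eauto.
  - right; left. assert (SD: sd (phi f g a) (phi f g c) s) by (left; auto).
    split; auto. eapply flip; eauto.
  - left. assert (SD: sd (phi f g a) (phi f g b) s) by (right; auto).
    split; auto. eapply flip; eauto.
  - right; right. assert (SD: sd (phi f g b) (phi f g c) s) by (left; auto).
    split; auto. eapply flip; eauto.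
  - right; left. assert (SD: sd (phi f g a) (phi f g c) s) by (right; auto).
    split; auto. eapply flip; eauto.
  - right; right. assert (SD: sd (phi f g b) (phi f g c) s) by (right; auto).
    split; auto. eapply flip; eauto.
Qed.

Lemma three_on_side s t1 t2 t3 : is_tri t1 -> is_tri t2 -> is_tri t3 ->
  side_of s t1 -> side_of s t2 -> side_of s t3 ->
  tri_eq t1 t2 \/ tri_eq t1 t3 \/ tri_eq t2 t3.
Proof.
  intros V1 V2 V3 S1 S2 S3.
  set (f := (1,0) : pt); set (g := (0,1) : pt).
  assert (H : Z.abs (det f g) = 1) by reflexivity.
  destruct (tri_with_side s t1 V1 S1) as [e1 [U1 [Ve1 [Va [Vb [D11 [D12 Dab]]]]]]].
  destruct (tri_with_side s t2 V2 S2) as [e2 [U2 [Ve2 [_ [_ [D21 [D22 _]]]]]]].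
  destruct (tri_with_side s t3 V3 S3) as [e3 [U3 [Ve3 [_ [_ [D31 [D32 _]]]]]]].
  destruct (vertex_is_phi f g _ H Va) as [a Ea].
  destruct (vertex_is_phi f g _ H Vb) as [b Eb].
  assert (Hab : Z.abs (det a b) = 1).
  { rewrite <- (dist_phi f g a b H), <- Ea, <- Eb; auto. }
  rewrite Ea, Eb in *.
  destruct (apex_phi f g a b e1 H Hab Ve1 D11 D12) as [w1 [E1 P1]].
  destruct (apex_phi f g a b e2 H Hab Ve2 D21 D22) as [w2 [E2 P2]].
  destruct (apex_phi f g a b e3 H Hab Ve3 D31 D32) as [w3 [E3 P3]].
  assert (NZ1: nz (vadd a b)).
  { clear -Hab. destruct a as [a1 a2], b as [b1 b2]; unfold nz, vadd, det in *; simpl in *.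
    destruct (Z.eq_dec (a1+b1) 0); [|left; auto]. destruct (Z.eq_dec (a2+b2) 0); [|right; auto].
    exfalso. assert (b1 = -a1) by lia. assert (b2 = -a2) by lia. subst.
    replace (a1 * - a2 - a2 * - a1) with 0 in Hab by ring; simpl in Hab; lia. }
  assert (NZ2: nz (vsub a b)).
  { clear -Hab. destruct a as [a1 a2], b as [b1 b2]; unfold nz, vsub, det in *; simpl in *.
    destruct (Z.eq_dec (a1-b1) 0); [|left; auto]. destruct (Z.eq_dec (a2-b2) 0); [|right; auto].
    exfalso. assert (b1 = a1) by lia. assert (b2 = a2) by lia. subst.
    replace (a1 * a2 - a2 * a1) with 0 in Hab by ring; simpl in Hab; lia. }
  assert (R: forall w, peq w (vadd a b) \/ peq w (vsub a b) ->
     phi f g w = phi f g (vadd a b) \/ phi f g w = phi f g (vsub a b)).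
  { intros w [P|P]; [left|right]; apply phi_eq; auto. }
  apply R in P1; apply R in P2; apply R in P3.
  assert (K: forall t t' e e', tri_eq t (phi f g a, phi f g b, e) ->
      tri_eq t' (phi f g a, phi f g b, e') -> e = e' -> tri_eq t t').
  { intros t t' e e' T T' ->. eapply tri_eq_trans; [exact T| apply tri_eq_sym; auto]. }
  destruct P1 as [P1|P1]; destruct P2 as [P2|P2]; destruct P3 as [P3|P3];
  try (left; eapply K; [exact U1|exact U2|congruence]);
  try (right; left; eapply K; [exact U1|exact U3|congruence]);
  (right; right; eapply K; [exact U2|exact U3|congruence]).
Qed.

Definition Mt : Type := ((Z*Z)*(Z*Z)*(Z*Z))%type.
Definition PT f g (M : Mt) : tri :=
  (phi f g (fst (fst M)), phi f g (snd (fst M)), phi f g (snd M)).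
Definition vin (v : Z*Z) (M : Mt) := peq v (fst (fst M)) \/ peq v (snd (fst M)) \/ peq v (snd M).
Definition nzM (M : Mt) := nz (fst (fst M)) /\ nz (snd (fst M)) /\ nz (snd M).

Lemma in_PT f g u M : Z.abs (det f g) = 1 -> in_tri (phi f g u) (PT f g M) -> vin u M.
Proof.
  intros H. unfold in_tri, PT, vin. destruct M as [[a b] c]; simpl.
  intros [E|[E|E]]; apply phi_inj in E; auto.
Qed.

Lemma in_PT_ex f g x M : in_tri x (PT f g M) ->
  x = phi f g (fst (fst M)) \/ x = phi f g (snd (fst M)) \/ x = phi f g (snd M).
Proof. unfold in_tri, PT. destruct M as [[a b] c]; simpl. auto. Qed.

Lemma PT_in1 f g M : in_tri (phi f g (fst (fst M))) (PT f g M).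
Proof. unfold in_tri, PT. destruct M as [[a b] c]; simpl. auto. Qed.
Lemma PT_in2 f g M : in_tri (phi f g (snd (fst M))) (PT f g M).
Proof. unfold in_tri, PT. destruct M as [[a b] c]; simpl. auto. Qed.
Lemma PT_in3 f g M : in_tri (phi f g (snd M)) (PT f g M).
Proof. unfold in_tri, PT. destruct M as [[a b] c]; simpl. auto. Qed.

Lemma vin_phi f g v M : Z.abs (det f g) = 1 -> nzM M -> vin v M ->
  phi f g v = phi f g (fst (fst M)) \/ phi f g v = phi f g (snd (fst M)) \/ phi f g v = phi f g (snd M).
Proof.
  intros H [N1 [N2 N3]] [V|[V|V]]; [left|right;left|right;right]; apply phi_eq; auto.
Qed.

Lemma tri_eq_PT f g M M' : Z.abs (det f g) = 1 -> nzM M -> nzM M' ->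
  vin (fst (fst M)) M' -> vin (snd (fst M)) M' -> vin (snd M) M' ->
  vin (fst (fst M')) M -> vin (snd (fst M')) M -> vin (snd M') M ->
  tri_eq (PT f g M) (PT f g M').
Proof.
  intros H N N' V1 V2 V3 V4 V5 V6. unfold PT.
  apply tri_eq_of; apply vin_phi; auto.
Qed.

Lemma in_teq x t u : tri_eq t u -> in_tri x t -> in_tri x u.
Proof. intros H; apply H. Qed.

Lemma PT_is_tri f g M : Z.abs (det f g) = 1 ->
  Z.abs (det (fst (fst M)) (snd (fst M))) = 1 ->
  Z.abs (det (snd (fst M)) (snd M)) = 1 ->
  Z.abs (det (fst (fst M)) (snd M)) = 1 -> is_tri (PT f g M).
Proof.
  destruct M as [[a b] c]; unfold PT; simpl; intros H H1 H2 H3.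
  assert (H4: Z.abs (det c a) = 1).
  { unfold det in *; rewrite <- Z.abs_opp; rewrite <- H3; f_equal; ring. }
  unfold is_tri. split; [apply vertex_phi with (w := b); auto|].
  split; [apply vertex_phi with (w := c); auto|].
  split; [apply vertex_phi with (w := a); auto|].
  rewrite !dist_phi; auto.
Qed.

Definition cv : Z*Z := (0,1).
Definition xv (k : Z) : Z*Z := (1,k).
Definition yv (i : Z) : Z*Z := (2,2*i+1).
Definition zv (i : Z) : Z*Z := (3,3*i+1).
Definition wv (i : Z) : Z*Z := (3,3*i+2).
Definition s1v (i : Z) : Z*Z := (4,4*i+1).
Definition s2v (i : Z) : Z*Z := (5,5*i+2).
Definition s3v (i : Z) : Z*Z := (5,5*i+3).
Definition s4v (i : Z) : Z*Z := (4,4*i+3).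

Definition MP i : Mt := (xv i, cv, xv (i+1)).
Definition MQ i : Mt := (xv i, xv (i+1), yv i).
Definition MR i : Mt := (xv i, yv i, zv i).
Definition MR' i : Mt := (xv (i+1), yv i, wv i).
Definition MS1 i : Mt := (xv i, zv i, s1v i).
Definition MS2 i : Mt := (yv i, zv i, s2v i).
Definition MS3 i : Mt := (yv i, wv i, s3v i).
Definition MS4 i : Mt := (xv (i+1), wv i, s4v i).

Ltac mdefs := unfold MP, MQ, MR, MR', MS1, MS2, MS3, MS4, cv, xv, yv, zv, wv, s1v, s2v, s3v, s4v in *.
Ltac arith := unfold other, nzM, nz, vin, peq, vadd, vsub, det in *; mdefs; cbn [fst snd] in *; lia.

Ltac pcon Hfg E := let P := fresh in pose proof (phi_inj _ _ _ _ Hfg E) as P;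
  unfold peq in P; mdefs; cbn [fst snd] in P; lia.

Lemma PT_tri f g M : Z.abs (det f g) = 1 -> tri_eq (PT f g M) (PT f g M).
Proof. intros; apply tri_eq_refl. Qed.

Lemma PT_eq f g a b c : PT f g (a,b,c) = (phi f g a, phi f g b, phi f g c).
Proof. reflexivity. Qed.

Ltac teqPT Hfg := apply tri_eq_PT; [exact Hfg | arith .. ].

Lemma path_core c p m f g : Z.abs (det f g) = 1 -> phi f g cv = c ->
  embedded_path_in_H c p m ->
  tri_eq (p 0%nat) (PT f g (MP 0)) -> (1 <= m)%nat -> in_tri (phi f g (1,1)) (p 1%nat) ->
  forall i, (i <= m)%nat -> tri_eq (p i) (PT f g (MP (Z.of_nat i))).
Proof.
  intros Hfg Hc [H0 [H1 H2]] P0 Hm W1.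
  assert (forall i, (i <= m)%nat -> forall j, (j <= i)%nat ->
            tri_eq (p j) (PT f g (MP (Z.of_nat j)))).
  { induction i as [|i IH]; intros Hi j Hj.
    - assert (j = 0%nat) by lia; subst; exact P0.
    - destruct (Nat.eq_dec j (S i)) as [->|Hne]; [|apply IH; lia].
      assert (Pi := IH ltac:(lia) i ltac:(lia)).
      destruct (H1 i ltac:(lia)) as [Adj [s [Si [Si1 Hcs]]]].
      set (k := Z.of_nat i) in *.
      replace (Z.of_nat (S i)) with (k+1) by (subst k; lia).
      unfold MP in Pi; rewrite PT_eq in Pi.
      destruct (nbr3 f g (xv k) cv (xv (k+1)) (xv (k-1)) (yv k) (xv (k+2)) (p i) (p (S i)) s
                  Hfg ltac:(arith) ltac:(arith) ltac:(arith) Pi Adj Si Si1)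
        as [[SD U]|[[SD U]|[SD U]]].
      + exfalso. destruct (Nat.eq_dec i 0) as [->|Hi0].
        * apply (in_teq _ _ _ U) in W1. unfold in_tri in W1.
          destruct W1 as [E|[E|E]]; pcon Hfg E.
        * assert (Pim := IH ltac:(lia) (i-1)%nat ltac:(lia)).
          apply (H2 (i-1)%nat (S i) ltac:(lia)).
          eapply tri_eq_trans; [exact Pim|]. eapply tri_eq_trans; [|apply tri_eq_sym; exact U].
          rewrite <- PT_eq. replace (Z.of_nat (i-1)) with (k-1) by (subst k; lia).
          teqPT Hfg.
      + exfalso. rewrite <- Hc in Hcs. unfold has_endpoint in Hcs.
        destruct SD as [[E1 E2]|[E1 E2]]; rewrite E1, E2 in Hcs;
        destruct Hcs as [E|E]; pcon Hfg E.
      + eapply tri_eq_trans; [exact U|]. rewrite <- PT_eq. teqPT Hfg. }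
  intros i Hi; apply (H i Hi i); lia.
Qed.

Lemma lin_id u : lin (1,0) (0,1) u = u.
Proof. destruct u; unfold lin; cbn [fst snd]; f_equal; ring. Qed.

Lemma phi_id_vertex x : is_vertex x -> phi (1,0) (0,1) x = x.
Proof. intro V; unfold phi; rewrite lin_id; apply Nz_vertex; auto. Qed.

Lemma choose_g e0 c w' : is_vertex c -> Z.abs (det e0 c) = 1 ->
  (peq w' (vadd e0 c) \/ peq w' (vsub e0 c)) ->
  exists g, Z.abs (det e0 g) = 1 /\ Nz g = c /\ peq w' (vadd e0 g) /\ nz (vadd e0 g).
Proof.
  intros Vc D [P|P].
  - exists c. split; auto. split; [apply Nz_vertex; auto|]. split; auto.
    destruct e0 as [a b], c as [x y]; unfold nz, vadd, det in *; cbn [fst snd] in *.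
    destruct (Z.eq_dec (a+x) 0); [|left;auto]. destruct (Z.eq_dec (b+y) 0); [|right;auto].
    exfalso. assert (x = -a) by lia. assert (y = -b) by lia. subst.
    replace (a * - b - b * - a) with 0 in D by ring; simpl in D; lia.
  - exists (- fst c, - snd c). destruct e0 as [a b], c as [x y]; cbn [fst snd] in *.
    split. { unfold det in *; cbn [fst snd] in *. rewrite <- Z.abs_opp, <- D; f_equal; ring. }
    split. { rewrite <- (Nz_vertex (x,y) Vc). apply peq_Nz. unfold peq; cbn [fst snd]; lia.
             destruct Vc as [G [Q|[Q1 Q2]]]; cbn [fst snd] in *; lia. }
    split. { unfold peq, vadd, vsub in *; cbn [fst snd] in *; lia. }
    unfold nz, vadd, det in *; cbn [fst snd] in *.
    destruct (Z.eq_dec (a+-x) 0); [|left;auto]. destruct (Z.eq_dec (b+-y) 0); [|right;auto].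
    exfalso. assert (x = a) by lia. assert (y = b) by lia. subst.
    replace (a * b - b * a) with 0 in D by ring; simpl in D; lia.
Qed.

Lemma path_model c p m : is_vertex c -> (1 <= m)%nat -> embedded_path_in_H c p m ->
  exists f g, Z.abs (det f g) = 1 /\ phi f g cv = c /\
    forall i, (i <= m)%nat -> tri_eq (p i) (PT f g (MP (Z.of_nat i))).
Proof.
  intros Vc Hm Hemb. pose proof Hemb as [H0 [H1 H2]].
  destruct (H1 0%nat ltac:(lia)) as [Adj [s0 [S00 [S01 Hc0]]]].
  destruct (tri_with_side s0 (p 0%nat) (H0 0%nat ltac:(lia)) S00)
    as [e0 [U0 [Ve0 [Vf [Vs [D1 [D2 D12]]]]]]].
  assert (Ex: exists w, is_vertex w /\ dist c w = 1 /\ dist c e0 = 1 /\ dist w e0 = 1 /\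
     tri_eq (p 0%nat) (c, w, e0) /\ in_tri w (p 1%nat)).
  { destruct S01 as [T1 [T2 _]]. destruct Hc0 as [E|E].
    - exists (snd s0). rewrite E in *. repeat (split; auto).
    - exists (fst s0). rewrite E in *. rewrite (dist_sym c (fst s0)).
      split; auto. split; auto. split; auto. split; auto. split; auto.
      eapply tri_eq_trans; [exact U0|]. apply tri_eq_of; auto. }
  destruct Ex as [w [Vw [Dcw [Dce [Dwe [U0' W1]]]]]].
  assert (Hid : Z.abs (det (1,0) (0,1)) = 1) by reflexivity.
  assert (Dec : Z.abs (det e0 c) = 1) by (rewrite <- dist_det, dist_sym; auto).
  destruct (apex_phi (1,0) (0,1) e0 c w Hid Dec Vw)
    as [w' [Ew Pw]];
    [rewrite phi_id_vertex; auto; rewrite dist_sym; auto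
    |rewrite phi_id_vertex; auto|].
  destruct (choose_g e0 c w' Vc Dec Pw) as [g [Hdg [Ng [Pg Ng2]]]].
  exists e0, g. split; auto.
  assert (Ec : phi e0 g cv = c).
  { unfold phi, cv. rewrite <- Ng. f_equal. destruct e0, g; unfold lin; cbn [fst snd]; f_equal; ring. }
  split; auto.
  assert (Ee : phi e0 g (1,0) = e0).
  { unfold phi. rewrite <- (Nz_vertex e0 Ve0) at 2. f_equal. destruct e0, g; unfold lin; cbn [fst snd]; f_equal; ring. }
  assert (Ew' : phi e0 g (1,1) = w).
  { rewrite Ew. unfold phi. rewrite lin_id.
    replace (lin e0 g (1,1)) with (vadd e0 g) by (destruct e0, g; unfold lin, vadd; cbn [fst snd]; f_equal; ring).
    symmetry; apply peq_Nz; auto. }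
  apply (path_core c p m e0 g); auto.
  - unfold MP, xv. rewrite PT_eq. change (0+1) with 1. rewrite Ec, Ee, Ew'.
    eapply tri_eq_trans; [exact U0'|]. apply tri_eq_of; auto.
  - rewrite Ew'; auto.
Qed.

Definition isT (A : Mt) := Z.abs (det (fst (fst A)) (snd (fst A))) = 1 /\
  Z.abs (det (snd (fst A)) (snd A)) = 1 /\ Z.abs (det (fst (fst A)) (snd A)) = 1.
Definition veq (u v : Z*Z) := fst u = fst v /\ snd u = snd v.
Definition In3 v (A : Mt) := veq v (fst (fst A)) \/ veq v (snd (fst A)) \/ veq v (snd A).

Lemma veq_eq u v : veq u v -> u = v.
Proof. destruct u, v; unfold veq; cbn [fst snd]; intros [-> ->]; auto. Qed.

Ltac arith2 := unfold isT, In3, veq, other, nzM, nz, vin, peq, vadd, vsub, det in *; mdefs;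
  cbn [fst snd] in *; lia.

Lemma isT_tri f g A : Z.abs (det f g) = 1 -> isT A -> is_tri (PT f g A).
Proof. intros H [H1 [H2 H3]]; apply PT_is_tri; auto. Qed.

Lemma PT_mem f g v M : Z.abs (det f g) = 1 -> nzM M -> vin v M -> in_tri (phi f g v) (PT f g M).
Proof.
  intros H N V. destruct (vin_phi f g v M H N V) as [E|[E|E]]; rewrite E;
  [apply PT_in1|apply PT_in2|apply PT_in3].
Qed.

Lemma In3_mem f g v M : In3 v M -> in_tri (phi f g v) (PT f g M).
Proof.
  intros [E|[E|E]]; apply veq_eq in E; subst; [apply PT_in1|apply PT_in2|apply PT_in3].
Qed.

Lemma side_PT f g s A : side_of s (PT f g A) ->
  exists a b, In3 a A /\ In3 b A /\ fst s = phi f g a /\ snd s = phi f g b.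
Proof.
  intros [S1 [S2 _]]. apply in_PT_ex in S1; apply in_PT_ex in S2.
  assert (R: forall x, x = phi f g (fst (fst A)) \/ x = phi f g (snd (fst A)) \/ x = phi f g (snd A) ->
             exists a, In3 a A /\ x = phi f g a).
  { intros x [E|[E|E]]; eexists; split; eauto; unfold In3, veq; auto. }
  destruct (R _ S1) as [a [Ha Ea]]; destruct (R _ S2) as [b [Hb Eb]].
  exists a, b; auto.
Qed.

Lemma side_vin f g s A x v : Z.abs (det f g) = 1 -> side_of s (PT f g A) ->
  (x = fst s \/ x = snd s) -> x = phi f g v -> vin v A.
Proof.
  intros H [S1 [S2 _]] [->| ->] E; rewrite E in *; eapply in_PT; eauto.
Qed.

Lemma sd_side f g s a b A : Z.abs (det f g) = 1 -> sd (phi f g a) (phi f g b) s ->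
  In3 a A -> In3 b A -> ~ peq a b -> side_of s (PT f g A).
Proof.
  intros H SD Ia Ib NP. apply side_of_sd with (x := phi f g a) (y := phi f g b); auto;
  try (apply In3_mem; auto). intro E; apply NP; eapply phi_inj; eauto.
Qed.

Lemma adj_PT f g A B a b : Z.abs (det f g) = 1 -> isT A -> isT B ->
  In3 a A -> In3 b A -> In3 a B -> In3 b B -> ~ peq a b -> nzM B ->
  (~ vin (fst (fst A)) B \/ ~ vin (snd (fst A)) B \/ ~ vin (snd A) B) ->
  adjacent (PT f g A) (PT f g B).
Proof.
  intros H TA TB Ia Ib Ja Jb NP NB ND.
  split; [apply isT_tri; auto|]. split; [apply isT_tri; auto|]. split.
  - intro TE. destruct ND as [N|[N|N]]; apply N; eapply in_PT; eauto; apply TE;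
    [apply PT_in1|apply PT_in2|apply PT_in3].
  - exists (phi f g a, phi f g b). split.
    + apply (sd_side f g _ a b A); [exact H | left; auto | auto..].
    + apply (sd_side f g _ a b B); [exact H | left; auto | auto..].
Qed.

Lemma nteq_PT f g A B : Z.abs (det f g) = 1 ->
  (~ vin (fst (fst A)) B \/ ~ vin (snd (fst A)) B \/ ~ vin (snd A) B) ->
  ~ tri_eq (PT f g A) (PT f g B).
Proof.
  intros H ND TE. destruct ND as [N|[N|N]]; apply N; eapply in_PT; eauto; apply TE;
    [apply PT_in1|apply PT_in2|apply PT_in3].
Qed.

Lemma adjacent_teq t t' u : tri_eq t t' -> is_tri t -> adjacent t' u -> adjacent t u.
Proof.
  intros E V [V' [Vu [NE [s [S1 S2]]]]]. split; auto. split; auto. split.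
  - intro E'. apply NE. eapply tri_eq_trans; [apply tri_eq_sym; exact E| exact E'].
  - exists s; split; auto. eapply side_of_teq; [exact S1|]. apply tri_eq_sym; auto.
Qed.

Lemma adjacent_sym t u : adjacent t u -> adjacent u t.
Proof.
  intros [V [V' [NE [s [S1 S2]]]]]. split; auto. split; auto. split.
  - intro E; apply NE, tri_eq_sym; auto.
  - exists s; auto.
Qed.

Lemma side_farey s t : is_tri t -> side_of s t -> farey_edge s.
Proof.
  intros V S. destruct (tri_with_side s t V S) as [e [_ [_ [V1 [V2 [_ [_ D]]]]]]].
  unfold farey_edge; auto.
Qed.

Ltac dlia := first [lia | match goal with H : _ \/ _ |- _ => destruct H; dlia end].

Definition HPath f g (p : nat -> tri) m :=
  forall j, (j <= m)%nat -> tri_eq (p j) (PT f g (MP (Z.of_nat j))).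

Lemma path_edge_PT f g p m s : HPath f g p m -> path_edges p m s ->
  exists j, (j < m)%nat /\ side_of s (PT f g (MP (Z.of_nat j))) /\
    side_of s (PT f g (MP (Z.of_nat j + 1))).
Proof.
  intros HP [j [Hj [S1 S2]]]. exists j. split; auto. split.
  - eapply side_of_teq; [exact S1| apply HP; lia].
  - replace (Z.of_nat j + 1) with (Z.of_nat (S j)) by lia.
    eapply side_of_teq; [exact S2| apply HP; lia].
Qed.

Lemma not_path_edge_Q f g p m i s0 : Z.abs (det f g) = 1 -> HPath f g p m ->
  side_of s0 (PT f g (MP (Z.of_nat i))) -> side_of s0 (PT f g (MQ (Z.of_nat i))) ->
  ~ path_edges p m s0.
Proof.
  intros H HP S1 S2 PE.
  destruct (path_edge_PT f g p m s0 HP PE) as [j [Hj [T1 T2]]].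
  destruct (side_PT f g s0 _ S2) as [a [b [Ia [Ib [Ea Eb]]]]].
  assert (NP : ~ peq a b).
  { intro P. destruct S2 as [_ [_ S3]]. apply S3. rewrite Ea, Eb. apply phi_eq; auto. arith2. }
  pose proof (side_vin f g s0 _ _ a H S1 (or_introl eq_refl) Ea).
  pose proof (side_vin f g s0 _ _ b H S1 (or_intror eq_refl) Eb).
  pose proof (side_vin f g s0 _ _ a H T1 (or_introl eq_refl) Ea).
  pose proof (side_vin f g s0 _ _ b H T1 (or_intror eq_refl) Eb).
  pose proof (side_vin f g s0 _ _ a H T2 (or_introl eq_refl) Ea).
  pose proof (side_vin f g s0 _ _ b H T2 (or_intror eq_refl) Eb).
  destruct a as [a1 a2], b as [b1 b2].
  unfold In3, veq in Ia, Ib; mdefs; cbn [fst snd] in Ia, Ib.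
  unfold vin, peq in *; mdefs; cbn [fst snd] in *.
  destruct Ia as [[-> ->]|[[-> ->]|[-> ->]]]; destruct Ib as [[-> ->]|[[-> ->]|[-> ->]]];
  dlia.
Qed.

Definition Uf (p : nat -> tri) i (A B C : tri) (j : nat) : tri :=
  match j with 0%nat => p i | 1%nat => A | 2%nat => B | _ => C end.

Lemma B_gen f g p m i r k M2 M3 s : Z.abs (det f g) = 1 -> HPath f g p m ->
  is_tri (p i) -> (1 <= i)%nat -> (i < m)%nat -> (1 <= k <= r)%nat -> (k <= 3)%nat ->
  adjacent (PT f g (MP (Z.of_nat i))) (PT f g (MQ (Z.of_nat i))) ->
  adjacent (PT f g (MQ (Z.of_nat i))) (PT f g M2) -> adjacent (PT f g M2) (PT f g M3) ->
  ~ tri_eq (PT f g (MP (Z.of_nat i))) (PT f g M2) ->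
  ~ tri_eq (PT f g (MP (Z.of_nat i))) (PT f g M3) ->
  ~ tri_eq (PT f g (MQ (Z.of_nat i))) (PT f g M3) ->
  (side_of s (PT f g (MP (Z.of_nat i))) /\ side_of s (PT f g (MQ (Z.of_nat i)))) \/
  ((2 <= k)%nat /\ side_of s (PT f g (MQ (Z.of_nat i))) /\ side_of s (PT f g M2)) \/
  ((3 <= k)%nat /\ side_of s (PT f g M2) /\ side_of s (PT f g M3)) ->
  B p m i r s.
Proof.
  intros H HP Vp Hi1 Him Hk Hk3 A1 A2 A3 N02 N03 N13 SE.
  assert (Pi := HP i ltac:(lia)).
  exists (Uf p i (PT f g (MQ (Z.of_nat i))) (PT f g M2) (PT f g M3)), k.
  split; auto. split; [reflexivity|]. split; [|split; [|split]].
  - intros j Hj. destruct j as [|[|[|j]]]; cbn [Uf]; auto; [|lia].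
    eapply adjacent_teq; eauto.
  - intros j j' Hjj. destruct A1 as [_ [_ [NE1 _]]]. destruct A2 as [_ [_ [NE2 _]]].
    destruct A3 as [_ [_ [NE3 _]]].
    destruct j as [|[|[|j]]]; destruct j' as [|[|[|[|j']]]]; cbn [Uf]; try lia;
    first [exact NE2 | exact NE3 | exact N13 |
      solve [intro E; apply NE1; eapply tri_eq_trans; [apply tri_eq_sym; exact Pi| exact E]] |
      solve [intro E; apply N02; eapply tri_eq_trans; [apply tri_eq_sym; exact Pi| exact E]] |
      solve [intro E; apply N03; eapply tri_eq_trans; [apply tri_eq_sym; exact Pi| exact E]]].
  - intros s0 S0 S1. cbn [Uf] in *. apply (not_path_edge_Q f g p m i s0 H HP);
    [eapply side_of_teq; [exact S0| exact Pi] | exact S1].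
  - destruct SE as [[S1 S2]|[[Hk2 [S1 S2]]|[Hk2 [S1 S2]]]].
    + exists 0%nat. split; [lia|]. cbn [Uf]. split; auto.
      eapply side_of_teq; [exact S1| apply tri_eq_sym; auto].
    + exists 1%nat. split; [lia|]. cbn [Uf]. auto.
    + exists 2%nat. split; [lia|]. cbn [Uf]. auto.
Qed.

Definition ChainOK f g I M2 M3 :=
  adjacent (PT f g (MP I)) (PT f g (MQ I)) /\ adjacent (PT f g (MQ I)) (PT f g M2) /\
  adjacent (PT f g M2) (PT f g M3) /\ ~ tri_eq (PT f g (MP I)) (PT f g M2) /\
  ~ tri_eq (PT f g (MP I)) (PT f g M3) /\ ~ tri_eq (PT f g (MQ I)) (PT f g M3).

Ltac adjPT H a b := apply (adj_PT _ _ _ _ a b); [exact H | arith2 ..].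
Ltac nteq H := apply nteq_PT; [exact H | arith2].

Lemma chain1 f g I : Z.abs (det f g) = 1 -> ChainOK f g I (MR I) (MS1 I).
Proof.
  intro H. split; [adjPT H (xv I) (xv (I+1))|]. split; [adjPT H (xv I) (yv I)|].
  split; [adjPT H (xv I) (zv I)|]. split; [nteq H|]. split; nteq H.
Qed.
Lemma chain2 f g I : Z.abs (det f g) = 1 -> ChainOK f g I (MR I) (MS2 I).
Proof.
  intro H. split; [adjPT H (xv I) (xv (I+1))|]. split; [adjPT H (xv I) (yv I)|].
  split; [adjPT H (yv I) (zv I)|]. split; [nteq H|]. split; nteq H.
Qed.
Lemma chain3 f g I : Z.abs (det f g) = 1 -> ChainOK f g I (MR' I) (MS3 I).
Proof.
  intro H. split; [adjPT H (xv I) (xv (I+1))|]. split; [adjPT H (xv (I+1)) (yv I)|].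
  split; [adjPT H (yv I) (wv I)|]. split; [nteq H|]. split; nteq H.
Qed.
Lemma chain4 f g I : Z.abs (det f g) = 1 -> ChainOK f g I (MR' I) (MS4 I).
Proof.
  intro H. split; [adjPT H (xv I) (xv (I+1))|]. split; [adjPT H (xv (I+1)) (yv I)|].
  split; [adjPT H (xv (I+1)) (wv I)|]. split; [nteq H|]. split; nteq H.
Qed.

Lemma PE_side f g p m j s : HPath f g p m -> (j < m)%nat ->
  side_of s (PT f g (MP (Z.of_nat j))) -> side_of s (PT f g (MP (Z.of_nat j + 1))) ->
  path_edges p m s.
Proof.
  intros HP Hj S1 S2. exists j. split; auto. split.
  - eapply side_of_teq; [exact S1| apply tri_eq_sym, HP; lia].
  - eapply side_of_teq; [exact S2|]. replace (Z.of_nat j + 1) with (Z.of_nat (S j)) by lia.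
    apply tri_eq_sym, HP; lia.
Qed.

Ltac sdside H a b := apply (sd_side _ _ _ a b); [exact H | left; split; reflexivity | arith2 ..].

Lemma side_x n f g p k : Z.abs (det f g) = 1 -> HPath f g p (7*n-1) ->
  (1 <= k <= 7*n-1)%nat -> T n p (phi f g cv, phi f g (xv (Z.of_nat k))).
Proof.
  intros H HP Hk. left. apply (PE_side f g p _ (k-1)%nat); auto; [lia| |];
  replace (Z.of_nat (k-1)) with (Z.of_nat k - 1) by lia; sdside H cv (xv (Z.of_nat k)).
Qed.

Lemma B_app f g p m i r k M2 M3 s : Z.abs (det f g) = 1 -> HPath f g p m ->
  (forall j, (j <= m)%nat -> is_tri (p j)) -> (1 <= i)%nat -> (i < m)%nat ->
  (1 <= k <= r)%nat -> (k <= 3)%nat -> ChainOK f g (Z.of_nat i) M2 M3 ->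
  (side_of s (PT f g (MP (Z.of_nat i))) /\ side_of s (PT f g (MQ (Z.of_nat i)))) \/
  ((2 <= k)%nat /\ side_of s (PT f g (MQ (Z.of_nat i))) /\ side_of s (PT f g M2)) \/
  ((3 <= k)%nat /\ side_of s (PT f g M2) /\ side_of s (PT f g M3)) ->
  B p m i r s.
Proof.
  intros H HP H0 Hi1 Him Hk Hk3 [A1 [A2 [A3 [N1 [N2 N3]]]]] SE.
  eapply B_gen; eauto. apply H0; lia.
Qed.

Lemma side_y n f g p i : Z.abs (det f g) = 1 -> HPath f g p (7*n-1) ->
  (forall j, (j <= 7*n-1)%nat -> is_tri (p j)) -> (1 <= n)%nat ->
  (2*n <= i <= 5*n-1)%nat -> T n p (phi f g (xv (Z.of_nat i)), phi f g (yv (Z.of_nat i))).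
Proof.
  intros H HP H0 Hn Hi. right.
  destruct (le_lt_dec (3*n) i); [destruct (le_lt_dec (4*n) i)|].
  - right; left. exists i. split. { unfold J2; lia. }
    apply (B_app f g p _ i 2 2 (MR (Z.of_nat i)) (MS1 (Z.of_nat i))); [exact H|exact HP|exact H0|lia|lia|lia|lia|apply chain1; auto|].
    right; left. split; [lia|]. split; sdside H (xv (Z.of_nat i)) (yv (Z.of_nat i)).
  - right; right. exists i. split. { unfold J3; lia. }
    apply (B_app f g p _ i 3 2 (MR (Z.of_nat i)) (MS1 (Z.of_nat i))); [exact H|exact HP|exact H0|lia|lia|lia|lia|apply chain1; auto|].
    right; left. split; [lia|]. split; sdside H (xv (Z.of_nat i)) (yv (Z.of_nat i)).
  - right; left. exists i. split. { unfold J2; lia. }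
    apply (B_app f g p _ i 2 2 (MR (Z.of_nat i)) (MS1 (Z.of_nat i))); [exact H|exact HP|exact H0|lia|lia|lia|lia|apply chain1; auto|].
    right; left. split; [lia|]. split; sdside H (xv (Z.of_nat i)) (yv (Z.of_nat i)).
Qed.

Lemma side_z n f g p i : Z.abs (det f g) = 1 -> HPath f g p (7*n-1) ->
  (forall j, (j <= 7*n-1)%nat -> is_tri (p j)) -> (1 <= n)%nat ->
  (3*n <= i <= 4*n-1)%nat -> T n p (phi f g (xv (Z.of_nat i)), phi f g (zv (Z.of_nat i))).
Proof.
  intros H HP H0 Hn Hi. right. right; right. exists i. split. { unfold J3; lia. }
  apply (B_app f g p _ i 3 3 (MR (Z.of_nat i)) (MS1 (Z.of_nat i))); [exact H|exact HP|exact H0|lia|lia|lia|lia|apply chain1; auto|].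
  right; right. split; [lia|]. split; sdside H (xv (Z.of_nat i)) (zv (Z.of_nat i)).
Qed.

Lemma side_w n f g p i : Z.abs (det f g) = 1 -> HPath f g p (7*n-1) ->
  (forall j, (j <= 7*n-1)%nat -> is_tri (p j)) -> (1 <= n)%nat ->
  (3*n <= i <= 4*n-1)%nat -> T n p (phi f g (wv (Z.of_nat i)), phi f g (xv (Z.of_nat i + 1))).
Proof.
  intros H HP H0 Hn Hi. right. right; right. exists i. split. { unfold J3; lia. }
  apply (B_app f g p _ i 3 3 (MR' (Z.of_nat i)) (MS4 (Z.of_nat i))); [exact H|exact HP|exact H0|lia|lia|lia|lia|apply chain4; auto|].
  right; right. split; [lia|]. split; sdside H (wv (Z.of_nat i)) (xv (Z.of_nat i + 1)).
Qed.

Definition EDGE I (r : nat) (M1 M2 : Mt) :=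
  (M1 = MP I /\ M2 = MQ I) \/ ((2 <= r)%nat /\ M1 = MQ I /\ (M2 = MR I \/ M2 = MR' I)) \/
  ((3 <= r)%nat /\ ((M1 = MR I /\ (M2 = MS1 I \/ M2 = MS2 I)) \/ (M1 = MR' I /\ (M2 = MS3 I \/ M2 = MS4 I)))).

Ltac perm := unfold PT; mdefs; cbn [fst snd]; apply tri_eq_of; auto 10.

Ltac stq u := first [apply (side_of_teq _ (u 0%nat)); assumption | apply (side_of_teq _ (u 1%nat)); assumption
  | apply (side_of_teq _ (u 2%nat)); assumption | apply (side_of_teq _ (u 3%nat)); assumption].

Lemma B_enum f g p m i r s : Z.abs (det f g) = 1 -> HPath f g p m ->
  (1 <= i)%nat -> (i < m)%nat -> (r <= 3)%nat -> B p m i r s ->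
  exists M1 M2, side_of s (PT f g M1) /\ side_of s (PT f g M2) /\ EDGE (Z.of_nat i) r M1 M2.
Proof.
  intros H HP Hi1 Him Hr [u [k [Hk [U0 [Adj [Dist [FE [j [Hj [S1 S2]]]]]]]]]].
  set (I := Z.of_nat i) in *.
  assert (F0 : tri_eq (u 0%nat) (PT f g (MP I))) by (rewrite U0; apply HP; lia).
  assert (F1 : tri_eq (u 1%nat) (PT f g (MQ I))).
  { assert (A01 := Adj 0%nat ltac:(lia)).
    pose proof A01 as [_ [_ [_ [s01 [T0 T1]]]]].
    destruct (nbr3 f g (xv I) cv (xv (I+1)) (xv (I-1)) (yv I) (xv (I+2)) (u 0%nat) (u 1%nat) s01
                H ltac:(arith) ltac:(arith) ltac:(arith) F0 A01 T0 T1)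
      as [[SD U]|[[SD U]|[SD U]]].
    - exfalso. apply (FE s01 T0 T1). apply (PE_side f g p m (i-1)%nat); [exact HP|lia| |];
      replace (Z.of_nat (i-1)) with (I-1) by (subst I; lia);
      apply (sd_side _ _ _ (xv I) cv); auto; arith2.
    - exact U.
    - exfalso. apply (FE s01 T0 T1). apply (PE_side f g p m i); [exact HP|lia| |];
      (apply (sd_side _ _ _ cv (xv (I+1))); [exact H| exact SD |arith2..]). }
  assert (F2 : (2 <= k)%nat -> tri_eq (u 2%nat) (PT f g (MR I)) \/ tri_eq (u 2%nat) (PT f g (MR' I))).
  { intro Hk2. assert (A12 := Adj 1%nat ltac:(lia)).
    pose proof A12 as [_ [_ [_ [s12 [T1 T2]]]]].
    destruct (nbr3 f g (xv I) (xv (I+1)) (yv I) cv (zv I) (wv I) (u 1%nat) (u 2%nat) s12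
                H ltac:(arith) ltac:(arith) ltac:(arith) F1 A12 T1 T2)
      as [[SD U]|[[SD U]|[SD U]]].
    - exfalso. apply (Dist 0%nat 2%nat ltac:(lia)).
      eapply tri_eq_trans; [exact F0|]. eapply tri_eq_trans; [|apply tri_eq_sym; exact U]. perm.
    - left; exact U.
    - right; exact U. }
  assert (F3 : (3 <= k)%nat ->
     (tri_eq (u 2%nat) (PT f g (MR I)) /\
        (tri_eq (u 3%nat) (PT f g (MS1 I)) \/ tri_eq (u 3%nat) (PT f g (MS2 I)))) \/
     (tri_eq (u 2%nat) (PT f g (MR' I)) /\
        (tri_eq (u 3%nat) (PT f g (MS3 I)) \/ tri_eq (u 3%nat) (PT f g (MS4 I))))).
  { intro Hk3. assert (A23 := Adj 2%nat ltac:(lia)).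
    pose proof A23 as [_ [_ [_ [s23 [T2 T3]]]]].
    destruct (F2 ltac:(lia)) as [R|R].
    - left. split; auto.
      destruct (nbr3 f g (xv I) (yv I) (zv I) (xv (I+1)) (s1v I) (s2v I) (u 2%nat) (u 3%nat) s23
                H ltac:(arith) ltac:(arith) ltac:(arith) R A23 T2 T3)
        as [[SD U]|[[SD U]|[SD U]]].
      + exfalso. apply (Dist 1%nat 3%nat ltac:(lia)).
        eapply tri_eq_trans; [exact F1|]. eapply tri_eq_trans; [|apply tri_eq_sym; exact U]. perm.
      + left; exact U.
      + right; exact U.
    - right. split; auto.
      destruct (nbr3 f g (xv (I+1)) (yv I) (wv I) (xv I) (s4v I) (s3v I) (u 2%nat) (u 3%nat) s23
                H ltac:(arith) ltac:(arith) ltac:(arith) R A23 T2 T3)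
        as [[SD U]|[[SD U]|[SD U]]].
      + exfalso. apply (Dist 1%nat 3%nat ltac:(lia)).
        eapply tri_eq_trans; [exact F1|]. eapply tri_eq_trans; [|apply tri_eq_sym; exact U]. perm.
      + right; exact U.
      + left; exact U. }
  destruct j as [|[|[|j]]]; [| | |lia].
  - exists (MP I), (MQ I). split; [stq u|].
    split; [stq u|]. left; auto.
  - destruct (F2 ltac:(lia)) as [R|R].
    + exists (MQ I), (MR I). split; [stq u|].
      split; [stq u|]. right; left. split; [lia|auto].
    + exists (MQ I), (MR' I). split; [stq u|].
      split; [stq u|]. right; left. split; [lia|auto].
  - destruct (F3 ltac:(lia)) as [[R [Q|Q]]|[R [Q|Q]]].
    + exists (MR I), (MS1 I). split; [stq u|].
      split; [stq u|]. right; right. split; [lia|]. left; auto.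
    + exists (MR I), (MS2 I). split; [stq u|].
      split; [stq u|]. right; right. split; [lia|]. left; auto.
    + exists (MR' I), (MS3 I). split; [stq u|].
      split; [stq u|]. right; right. split; [lia|]. right; auto.
    + exists (MR' I), (MS4 I). split; [stq u|].
      split; [stq u|]. right; right. split; [lia|]. right; auto.
Qed.

Definition MLe (n : nat) (v : Z*Z) : Prop :=
  (fst v = 0 /\ snd v = 1) \/ (fst v = 1 /\ 1 <= snd v <= 7 * Z.of_nat n - 1) \/
  (fst v = 2 /\ snd v mod 2 = 1 /\ 4 * Z.of_nat n + 1 <= snd v <= 10 * Z.of_nat n - 1) \/
  (fst v = 3 /\ snd v mod 3 <> 0 /\ 9 * Z.of_nat n + 1 <= snd v <= 12 * Z.of_nat n - 1).

Definition VT (n : nat) (M : Mt) : Prop := exists I,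
  (0 <= I <= 7 * Z.of_nat n - 1 /\ M = MP I) \/
  (1 <= I <= 7 * Z.of_nat n - 2 /\ M = MQ I) \/
  (2 * Z.of_nat n <= I <= 5 * Z.of_nat n - 1 /\ (M = MR I \/ M = MR' I)) \/
  (3 * Z.of_nat n <= I <= 4 * Z.of_nat n - 1 /\
     (M = MS1 I \/ M = MS2 I \/ M = MS3 I \/ M = MS4 I)).

Lemma tip n M1 M2 v v' : VT n M1 -> VT n M2 -> In3 v M1 -> In3 v' M2 -> peq v v' ->
  ~ MLe n v -> M1 = M2.
Proof.
  intros [I H1] [J H2] I1 I2 P NM.
  destruct v as [v1 v2], v' as [w1 w2].
  unfold MLe, peq in *; cbn [fst snd] in *.
  destruct H1 as [[B1 ->]|[[B1 ->]|[[B1 [->| ->]]|[B1 [->|[->|[->| ->]]]]]]];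
  destruct H2 as [[B2 ->]|[[B2 ->]|[[B2 [->| ->]]|[B2 [->|[->|[->| ->]]]]]]];
  unfold In3, veq in I1, I2; mdefs; cbn [fst snd] in I1, I2;
  destruct I1 as [[E1 E2]|[[E1 E2]|[E1 E2]]]; destruct I2 as [[F1 F2]|[[F1 F2]|[F1 F2]]];
  destruct P as [[P1 P2]|[P1 P2]]; subst v1 w1; try discriminate P1;
  subst v2 w2; Z.div_mod_to_equations;
  first [ (assert (I = J) by lia; subst; reflexivity) | (exfalso; lia) ].
Qed.

Definition CommonML n M1 M2 := forall v v', In3 v M1 -> In3 v' M2 -> peq v v' -> MLe n v.

Ltac cml := let v := fresh "v" in let v' := fresh "v'" in
  let I1 := fresh in let I2 := fresh in let P := fresh in
  intros v v' I1 I2 P; destruct v as [v1 v2], v' as [w1 w2];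
  unfold MLe, peq in *; cbn [fst snd] in *;
  unfold In3, veq in I1, I2; mdefs; cbn [fst snd] in I1, I2;
  destruct I1 as [[E1 E2]|[[E1 E2]|[E1 E2]]]; destruct I2 as [[F1 F2]|[[F1 F2]|[F1 F2]]];
  destruct P as [[P1 P2]|[P1 P2]]; subst v1 w1; try discriminate P1;
  subst v2 w2; Z.div_mod_to_equations; lia.

Ltac vt I := exists I; mdefs; lia.

Lemma PP_ok f g n J : Z.abs (det f g) = 1 -> 0 <= J <= 7 * Z.of_nat n - 2 ->
  CommonML n (MP J) (MP (J+1)) /\ VT n (MP J) /\ VT n (MP (J+1)) /\
  ~ tri_eq (PT f g (MP J)) (PT f g (MP (J+1))).
Proof.
  intros H HJ. split; [cml|]. split; [exists J; left; split; auto; lia|].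
  split; [exists (J+1); left; split; auto; lia|]. nteq H.
Qed.

Lemma EDGE_ok f g n I r M1 M2 : Z.abs (det f g) = 1 -> 1 <= I <= 7 * Z.of_nat n - 2 ->
  ((2 <= r)%nat -> 2 * Z.of_nat n <= I <= 5 * Z.of_nat n - 1) ->
  ((3 <= r)%nat -> 3 * Z.of_nat n <= I <= 4 * Z.of_nat n - 1) ->
  EDGE I r M1 M2 ->
  CommonML n M1 M2 /\ VT n M1 /\ VT n M2 /\ ~ tri_eq (PT f g M1) (PT f g M2).
Proof.
  intros H HI H2 H3 E.
  destruct E as [[-> ->]|[[Hr [-> [-> | ->]]]|[Hr [[-> [-> | ->]]|[-> [-> | ->]]]]]];
  try specialize (H3 ltac:(lia)); try specialize (H2 ltac:(lia));
  (split; [cml|]);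
  (split; [exists I; first [solve [left; split; auto; lia] | solve [right; left; split; auto; lia]
     | solve [right; right; left; split; [lia|]; auto] | solve [right; right; right; split; [lia|]; auto 6]] |]);
  (split; [exists I; first [solve [left; split; auto; lia] | solve [right; left; split; auto; lia]
     | solve [right; right; left; split; [lia|]; auto] | solve [right; right; right; split; [lia|]; auto 6]] |]);
  nteq H.
Qed.

Lemma vin_In3 a M : vin a M -> exists v, In3 v M /\ peq a v.
Proof.
  destruct M as [[x y] z]; unfold vin, In3, veq; cbn [fst snd].
  intros [P|[P|P]].
  - exists x; split; auto.
  - exists y; split; auto.
  - exists z; split; auto.
Qed.

Definition KI n f g (s : side) :=
  (exists v, fst s = phi f g v /\ MLe n v) /\ (exists v, snd s = phi f g v /\ MLe n v) /\
  exists M1 M2, VT n M1 /\ VT n M2 /\ side_of s (PT f g M1) /\ side_of s (PT f g M2) /\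
    ~ tri_eq (PT f g M1) (PT f g M2).

Lemma KI_of n f g s M1 M2 : Z.abs (det f g) = 1 ->
  side_of s (PT f g M1) -> side_of s (PT f g M2) ->
  CommonML n M1 M2 /\ VT n M1 /\ VT n M2 /\ ~ tri_eq (PT f g M1) (PT f g M2) -> KI n f g s.
Proof.
  intros H S1 S2 [CM [V1 [V2 NE]]]. unfold KI.
  destruct (side_PT f g s M1 S1) as [a [b [Ia [Ib [Ea Eb]]]]].
  pose proof (side_vin f g s M2 _ a H S2 (or_introl eq_refl) Ea) as Va.
  pose proof (side_vin f g s M2 _ b H S2 (or_intror eq_refl) Eb) as Vb.
  destruct (vin_In3 a M2 Va) as [a' [Ia' Pa]].
  destruct (vin_In3 b M2 Vb) as [b' [Ib' Pb]].
  split; [exists a; split; [auto| apply (CM a a'); auto]|].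
  split; [exists b; split; [auto| apply (CM b b'); auto]|].
  exists M1, M2; auto.
Qed.

Lemma Kinfo n f g p s : Z.abs (det f g) = 1 -> HPath f g p (7*n-1) -> (1 <= n)%nat ->
  T n p s -> KI n f g s.
Proof.
  intros H HP Hn HT.
  destruct HT as [PE|[[i [HJ HB]]|[[i [HJ HB]]|[i [HJ HB]]]]].
  - destruct (path_edge_PT f g p _ s HP PE) as [j [Hj [S1 S2]]].
    apply (KI_of n f g s _ _ H S1 S2). apply PP_ok; auto. lia.
  - unfold J1 in HJ.
    destruct (B_enum f g p _ i 1 s H HP ltac:(lia) ltac:(lia) ltac:(lia) HB) as [M1 [M2 [S1 [S2 E]]]].
    apply (KI_of n f g s _ _ H S1 S2). apply (EDGE_ok f g n (Z.of_nat i) 1 M1 M2 H); auto; lia.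
  - unfold J2 in HJ.
    destruct (B_enum f g p _ i 2 s H HP ltac:(lia) ltac:(lia) ltac:(lia) HB) as [M1 [M2 [S1 [S2 E]]]].
    apply (KI_of n f g s _ _ H S1 S2). apply (EDGE_ok f g n (Z.of_nat i) 2 M1 M2 H); auto; lia.
  - unfold J3 in HJ.
    destruct (B_enum f g p _ i 3 s H HP ltac:(lia) ltac:(lia) ltac:(lia) HB) as [M1 [M2 [S1 [S2 E]]]].
    apply (KI_of n f g s _ _ H S1 S2). apply (EDGE_ok f g n (Z.of_nat i) 3 M1 M2 H); auto; lia.
Qed.

Lemma T_farey n p s : (forall j, (j <= 7*n-1)%nat -> is_tri (p j)) -> T n p s -> farey_edge s.
Proof.
  intros H0 HT.
  destruct HT as [[i [Hi [S1 S2]]]|[[i [_ HB]]|[[i [_ HB]]|[i [_ HB]]]]];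
  [apply (side_farey s (p i)); auto; apply H0; lia| ..];
  destruct HB as [u [k [_ [_ [Adj [_ [_ [j [Hj [S1 S2]]]]]]]]]];
  destruct (Adj j Hj) as [V _]; apply (side_farey s (u j)); auto.
Qed.

Lemma Kside n f g p v : Z.abs (det f g) = 1 -> HPath f g p (7*n-1) ->
  (forall j, (j <= 7*n-1)%nat -> is_tri (p j)) -> (1 <= n)%nat -> MLe n v ->
  exists s, T n p s /\ has_endpoint (phi f g v) s.
Proof.
  intros H HP H0 Hn ML. destruct v as [a b]. unfold MLe in ML; cbn [fst snd] in ML.
  destruct ML as [[-> ->]|[[-> Hb]|[[-> [Hm Hb]]|[-> [Hm Hb]]]]].
  - eexists; split; [apply (side_x n f g p 1); auto; lia|]. left; reflexivity.
  - assert (Z.of_nat (Z.to_nat b) = b) by (apply Z2Nat.id; lia).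
    eexists; split; [apply (side_x n f g p (Z.to_nat b)); auto; lia|].
    right; cbn [snd]. rewrite Z2Nat.id by lia. reflexivity.
  - set (I := (b-1)/2).
    assert (HI : b = 2*I+1 /\ 2 * Z.of_nat n <= I <= 5 * Z.of_nat n - 1)
      by (subst I; Z.div_mod_to_equations; lia).
    assert (Z.of_nat (Z.to_nat I) = I) by (apply Z2Nat.id; lia).
    eexists; split; [apply (side_y n f g p (Z.to_nat I)); auto; lia|].
    right; cbn [snd]. rewrite Z2Nat.id by lia. unfold yv. f_equal. f_equal. lia.
  - set (I := b/3).
    assert (HI : (b = 3*I+1 \/ b = 3*I+2) /\ 3 * Z.of_nat n <= I <= 4 * Z.of_nat n - 1)
      by (subst I; Z.div_mod_to_equations; lia).
    destruct HI as [[E|E] HI];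
    (assert (Z.of_nat (Z.to_nat I) = I) by (apply Z2Nat.id; lia)).
    + eexists; split; [apply (side_z n f g p (Z.to_nat I)); auto; lia|].
      right; cbn [snd]. rewrite Z2Nat.id by lia. unfold zv. f_equal. f_equal. lia.
    + eexists; split; [apply (side_w n f g p (Z.to_nat I)); auto; lia|].
      left; cbn [fst]. rewrite Z2Nat.id by lia. unfold wv. f_equal. f_equal. lia.
Qed.

Lemma VT_isT n M : VT n M -> isT M.
Proof.
  intros [I H1].
  destruct H1 as [[B1 ->]|[[B1 ->]|[[B1 [->| ->]]|[B1 [->|[->|[->| ->]]]]]]]; arith2.
Qed.

Lemma inc_model n f g p t : Z.abs (det f g) = 1 -> HPath f g p (7*n-1) -> (1 <= n)%nat ->
  sub_verts (T n p) t -> exists M, VT n M /\ tri_eq t (PT f g M).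
Proof.
  intros H HP Hn [Vt [s [St Ks]]].
  destruct (Kinfo n f g p s H HP Hn Ks) as [_ [_ [M1 [M2 [V1 [V2 [S1 [S2 NE]]]]]]]].
  destruct (three_on_side s t (PT f g M1) (PT f g M2) Vt
              (isT_tri f g M1 H (VT_isT n M1 V1)) (isT_tri f g M2 H (VT_isT n M2 V2)) St S1 S2)
    as [E|[E|E]]; [exists M1; auto|exists M2; auto|contradiction].
Qed.

Lemma Hverts_in x t : H_verts x t -> in_tri x t.
Proof. intros [_ [s [[S1 [S2 _]] [E|E]]]]; rewrite <- E; auto. Qed.

Lemma in_PT_In3 f g x M : in_tri x (PT f g M) -> exists a, In3 a M /\ x = phi f g a.
Proof.
  intro Hx. destruct (in_PT_ex f g x M Hx) as [E|[E|E]]; eexists; split; eauto;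
  unfold In3, veq; auto.
Qed.

Lemma V_char n f g p : Z.abs (det f g) = 1 -> HPath f g p (7*n-1) ->
  (forall j, (j <= 7*n-1)%nat -> is_tri (p j)) -> (1 <= n)%nat ->
  forall x, V_of (T n p) x <-> exists v, MLe n v /\ x = phi f g v.
Proof.
  intros H HP H0 Hn x. split.
  - intros [Vx [NE NS]].
    destruct (classic (exists s, T n p s /\ has_endpoint x s)) as [[s [Ts He]]|NoS].
    + destruct (Kinfo n f g p s H HP Hn Ts) as [[v1 [E1 M1]] [[v2 [E2 M2]] _]].
      destruct He as [He|He]; [exists v1|exists v2]; split; congruence.
    + assert (NoE : forall s, ~ inter_edges x (T n p) s).
      { intros s [[_ He] Ks]. apply NoS; eauto. }
      destruct (classic (exists t, inter_verts x (T n p) t)) as [[t It]|Nt];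
        [| exfalso; apply NE; split; [intros t It; apply Nt; eauto | exact NoE]].
      destruct (classic (exists t', inter_verts x (T n p) t' /\ ~ tri_eq t t')) as [[t' [It' Nt']]|N2];
        [| exfalso; apply NS; split; [|exact NoE]; exists t; split; auto;
           intros t' It'; apply NNPP; intro; apply N2; eauto].
      destruct It as [Ht St], It' as [Ht' St'].
      destruct (inc_model n f g p t H HP Hn St) as [M [VM TM]].
      destruct (inc_model n f g p t' H HP Hn St') as [M' [VM' TM']].
      apply Hverts_in in Ht; apply Hverts_in in Ht'.
      apply TM in Ht; apply TM' in Ht'.
      destruct (in_PT_In3 f g x M Ht) as [a [Ia Ea]].
      destruct (in_PT_In3 f g x M' Ht') as [a' [Ia' Ea']].
      assert (P : peq a a') by (apply (phi_inj f g); auto; congruence).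
      destruct (classic (MLe n a)) as [Ma|Ma].
      * exists a; auto.
      * exfalso. assert (M = M') by (apply (tip n M M' a a'); auto). subst M'.
        apply Nt'. eapply tri_eq_trans; [exact TM| apply tri_eq_sym; exact TM'].
  - intros [v [ML ->]].
    destruct (Kside n f g p v H HP H0 Hn ML) as [s [Ts He]].
    pose proof (T_farey n p s H0 Ts) as Fs.
    assert (IE : inter_edges (phi f g v) (T n p) s) by (split; [split|]; auto).
    split; [|split].
    + destruct Fs as [V1 [V2 _]]. destruct He as [He|He]; rewrite <- He; auto.
    + intros [_ E]. apply (E s IE).
    + intros [_ E]. apply (E s IE).
Qed.

Definition zr (a : Z) (len : nat) : list Z := map (fun k => a + Z.of_nat k) (seq 0 len).

Lemma In_zr x a len : In x (zr a len) <-> a <= x < a + Z.of_nat len.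
Proof.
  unfold zr; rewrite in_map_iff; split.
  - intros [k [<- Hk]]. apply in_seq in Hk. lia.
  - intros Hx. exists (Z.to_nat (x - a)). split; [rewrite Z2Nat.id; lia|].
    apply in_seq. lia.
Qed.

Lemma NoDup_zr a len : NoDup (zr a len).
Proof.
  unfold zr. apply NoDup_map_NoDup_ForallPairs; [intros x y _ _ E; lia| apply seq_NoDup].
Qed.

Lemma length_zr a len : length (zr a len) = len.
Proof. unfold zr. rewrite length_map, length_seq. auto. Qed.

Definition MLl (n : nat) : list (Z*Z) :=
  cv :: (map xv (zr 1 (7*n-1)) ++ (map yv (zr (2 * Z.of_nat n) (3*n)) ++
     (map zv (zr (3 * Z.of_nat n) n) ++ map wv (zr (3 * Z.of_nat n) n)))).

Lemma In_MLl n v : (1 <= n)%nat -> In v (MLl n) <-> MLe n v.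
Proof.
  intro Hn. unfold MLl. cbn [In]. rewrite !in_app_iff, !in_map_iff. split.
  - intros [<-|[[k [<- Hk]]|[[k [<- Hk]]|[[k [<- Hk]]|[k [<- Hk]]]]]]; try apply In_zr in Hk;
    unfold MLe; mdefs; cbn [fst snd]; Z.div_mod_to_equations; lia.
  - destruct v as [a b]. unfold MLe; cbn [fst snd].
    intros [[-> ->]|[[-> Hb]|[[-> [Hm Hb]]|[-> [Hm Hb]]]]].
    + left; reflexivity.
    + right; left. exists b; split; [reflexivity|]. apply In_zr; lia.
    + right; right; left. exists ((b-1)/2). split.
      * unfold yv; f_equal; Z.div_mod_to_equations; lia.
      * apply In_zr; Z.div_mod_to_equations; lia.
    + assert (b mod 3 = 1 \/ b mod 3 = 2) as [Hb3|Hb3] by (Z.div_mod_to_equations; lia).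
      * right; right; right; left. exists (b/3). split.
        -- unfold zv; f_equal; Z.div_mod_to_equations; lia.
        -- apply In_zr; Z.div_mod_to_equations; lia.
      * right; right; right; right. exists (b/3). split.
        -- unfold wv; f_equal; Z.div_mod_to_equations; lia.
        -- apply In_zr; Z.div_mod_to_equations; lia.
Qed.

Lemma NoDup_map_inj (h : Z -> Z*Z) l : (forall x y, h x = h y -> x = y) -> NoDup l -> NoDup (map h l).
Proof. intros Hi Hl. apply NoDup_map_NoDup_ForallPairs; auto. intros x y _ _; auto. Qed.

Lemma NoDup_MLl n : NoDup (MLl n).
Proof.
  unfold MLl. constructor.
  - rewrite !in_app_iff, !in_map_iff. unfold cv, xv, yv, zv, wv.
    intros [[k [E _]]|[[k [E _]]|[[k [E _]]|[k [E _]]]]]; mdefs; inversion E.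
  - apply NoDup_app; [apply NoDup_map_inj; [intros x y E; apply (f_equal snd) in E; mdefs; cbn [snd] in E; lia|apply NoDup_zr]| |].
    + apply NoDup_app; [apply NoDup_map_inj; [intros x y E; apply (f_equal snd) in E; mdefs; cbn [snd] in E; lia|apply NoDup_zr]| |].
      * apply NoDup_app; [apply NoDup_map_inj; [intros x y E; apply (f_equal snd) in E; mdefs; cbn [snd] in E; lia|apply NoDup_zr]
                         |apply NoDup_map_inj; [intros x y E; apply (f_equal snd) in E; mdefs; cbn [snd] in E; lia|apply NoDup_zr]|].
        intros a Ha Hb. apply in_map_iff in Ha, Hb. destruct Ha as [k [<- _]], Hb as [k' [E _]].
        apply (f_equal snd) in E; mdefs; cbn [snd] in E; lia.
      * intros a Ha Hb. rewrite in_app_iff, !in_map_iff in Hb. apply in_map_iff in Ha.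
        destruct Ha as [k [<- _]]. destruct Hb as [[k' [E _]]|[k' [E _]]]; mdefs; inversion E.
    + intros a Ha Hb. rewrite !in_app_iff, !in_map_iff in Hb. apply in_map_iff in Ha.
      destruct Ha as [k [<- _]]. destruct Hb as [[k' [E _]]|[[k' [E _]]|[k' [E _]]]]; mdefs; inversion E.
Qed.

Lemma length_MLl n : (1 <= n)%nat -> length (MLl n) = (12 * n)%nat.
Proof.
  intro Hn. unfold MLl. cbn [length]. rewrite !length_app, !length_map, !length_zr. lia.
Qed.

Lemma ML_bound n v v' : (1 <= n)%nat -> MLe n v -> MLe n v' ->
  Z.abs (det v v') <= 12 * Z.of_nat n - 4.
Proof.
  intros Hn. destruct v as [a b], v' as [a' b']. unfold MLe, det; cbn [fst snd].
  intros [[-> Hb]|[[-> Hb]|[[-> [_ Hb]]|[-> [_ Hb]]]]];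
  intros [[-> Hb']|[[-> Hb']|[[-> [_ Hb']]|[-> [_ Hb']]]]]; lia.
Qed.

Theorem lemma5p8 (n : nat) (c : pt) (p : nat -> tri) :
  (1 <= n)%nat -> is_vertex c -> embedded_path_in_H c p (7 * n - 1) ->
  I_is (T n p) (Z.of_nat (12 * n) - 4) /\ card_is (V_of (T n p)) (12 * n).
Proof.
  intros Hn Vc Hemb.
  destruct (path_model c p (7*n-1) Vc ltac:(lia) Hemb) as [f [g [H [Hc HP]]]].
  pose proof Hemb as [H0 _].
  assert (VC := V_char n f g p H HP H0 Hn).
  split.
  - split.
    + exists (phi f g (yv (2 * Z.of_nat n))), (phi f g (yv (5 * Z.of_nat n - 1))).
      split; [apply VC; eexists; split; [|reflexivity]|].
      { unfold MLe, yv; cbn [fst snd]; Z.div_mod_to_equations; lia. }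
      split; [apply VC; eexists; split; [|reflexivity]|].
      { unfold MLe, yv; cbn [fst snd]; Z.div_mod_to_equations; lia. }
      rewrite dist_phi by auto. unfold det, yv; cbn [fst snd]. lia.
    + intros c1 c2 V1 V2. apply VC in V1, V2.
      destruct V1 as [v1 [M1 ->]], V2 as [v2 [M2 ->]].
      rewrite dist_phi by auto. pose proof (ML_bound n v1 v2 Hn M1 M2). lia.
  - exists (map (phi f g) (MLl n)). split; [|split].
    + apply NoDup_map_NoDup_ForallPairs; [|apply NoDup_MLl].
      intros a b Ia Ib E. apply (In_MLl n a Hn) in Ia. apply (In_MLl n b Hn) in Ib.
      apply (phi_inj f g a b H) in E.
      destruct a as [a1 a2], b as [b1 b2]. unfold MLe, peq in *; cbn [fst snd] in *.
      assert (a1 = b1 /\ a2 = b2) as [-> ->] by lia. reflexivity.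
    + intro x. rewrite in_map_iff, VC. split.
      * intros [v [<- Iv]]. exists v. split; auto. apply In_MLl; auto.
      * intros [v [Mv ->]]. exists v. split; auto. apply In_MLl; auto.
    + rewrite length_map. apply length_MLl; auto.
Qed.
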